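(* Let $i\in\{3\frac{1}{2},4,5\}$ and let $X$ be a locally connected $T_i$-space. Let $\mathscr{Y}_i(X)$ be the set of (equivalence classes of) $T_i$ one-point connectifications of $X$, where for $Y_1,Y_2\in\mathscr{Y}_i(X)$ we put $Y_1\leq Y_2$ if there is a continuous map $f:Y_2\to Y_1$ fixing every point of $X$. Let $$\mathscr{Z}(X)=\{Z\subseteq\beta X\setminus X:\ Z\text{ is compact and } Z\cap\mathrm{cl}_{\beta X}C\neq\emptyset\text{ for every component }C\text{ of }X\},$$ partially ordered by inclusion. For $Z\in\mathscr{Z}(X)$ let $Q$ be the quotient space of $\beta X$ obtained by contracting $Z$ to a single point $z$, and let $\zeta_X(Z)=X\cup\{z\}$, regarded as a subspace of $Q$. Then $\zeta_X(Z)\in\mathscr{Y}_i(X)$ for every $Z\in\mathscr{Z}(X)$, and the map $\zeta_X:(\mathscr{Z}(X),\subseteq)\to(\mathscr{Y}_i(X),\leq)$ is an anti-order-isomorphism.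
   Context: Conventions: $T_{3\frac12}$ = completely regular and $T_1$; $T_4$ = normal and $T_1$; $T_5$ = hereditarily normal (every subspace normal) and $T_1$. $\beta X$ denotes the Stone–Čech compactification of $X$. A one-point connectification of $X$ is a connected space $Y$ containing $X$ as a dense subspace with $Y\setminus X$ a singleton; two one-point connectifications are equivalent if there is a homeomorphism between them fixing every point of $X$, and equivalent ones are identified. A map $f:P\to Q$ between partially ordered sets is an anti-order-homomorphism if $a\le b$ implies $f(b)\le f(a)$; it is an anti-order-isomorphism if it is bijective and both $f$ and $f^{-1}$ are anti-order-homomorphisms. *)

(* Defs.v *)
From HB Require Import structures.
From mathcomp Require Import all_boot all_order all_algebra.
From mathcomp Require Import all_classical.
From mathcomp Require Import topology.
From mathcomp Require Import Rstruct Rstruct_topology.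
From Stdlib Require Import Rdefinitions Raxioms.

Set Implicit Arguments.
Unset Strict Implicit.
Unset Printing Implicit Defensive.

Local Open Scope classical_set_scope.

Definition T1_space (T : topologicalType) : Prop := accessible_space T.

Definition completely_regular (T : topologicalType) : Prop :=
  forall (x : T) (F : set T), closed F -> ~ F x ->
    exists f : T -> Rdefinitions.R,
      [/\ continuous f, f x = 0%R,
          (forall y, F y -> f y = 1%R) &
          (forall y, (0 <= f y)%R /\ (f y <= 1)%R)].

Definition hereditarily_normal (T : topologicalType) : Prop :=
  forall A : set T, normal_space (set_type A).

Inductive sep_index := T3half | T4 | T5.

Definition Ti (i : sep_index) (T : topologicalType) : Prop :=
  match i with
  | T3half => T1_space T /\ completely_regular T
  | T4 => T1_space T /\ normal_space T
  | T5 => T1_space T /\ hereditarily_normal T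
  end.

Definition locally_connected (T : topologicalType) : Prop :=
  forall (x : T) (U : set T), nbhs x U ->
    exists V : set T, [/\ open V, V x, V `<=` U & connected V].

Definition embedding (X Y : topologicalType) (e : X -> Y) : Prop :=
  [/\ continuous e, injective e &
      forall U : set X, open U ->
        exists V : set Y, open V /\ e @` U = V `&` range e].

Definition stone_cech (X B : topologicalType) (e : X -> B) : Prop :=
  [/\ compact [set: B], hausdorff_space B, embedding e,
      closure (range e) = [set: B] &
      forall (K : topologicalType) (f : X -> K),
        compact [set: K] -> hausdorff_space K -> continuous f ->
        exists g : B -> K, continuous g /\ g \o e = f].

Definition one_point_connectification (X Y : topologicalType) (e : X -> Y)
  : Prop :=
  [/\ embedding e, closure (range e) = [set: Y],
      (exists p : Y, ~ range e p /\ forall y, ~ range e y -> y = p) &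
      connected [set: Y]].

Definition conn_le (X Y1 Y2 : topologicalType) (e1 : X -> Y1) (e2 : X -> Y2)
  : Prop :=
  exists f : Y2 -> Y1, continuous f /\ f \o e2 = e1.

Definition conn_equiv (X Y1 Y2 : topologicalType) (e1 : X -> Y1) (e2 : X -> Y2)
  : Prop :=
  exists h : Y1 -> Y2,
    [/\ continuous h,
        (exists g : Y2 -> Y1, [/\ continuous g, cancel h g & cancel g h]) &
        h \o e1 = e2].

Definition Zfamily (X B : topologicalType) (e : X -> B) (Z : set B) : Prop :=
  [/\ Z `<=` ~` range e, compact Z &
      forall x : X,
        Z `&` closure (e @` connected_component [set: X] x) !=set0].

(* carrier of the quotient beta X / Z : None is the point z *)
Definition collapse (B : topologicalType) (Z : set B) : Type :=
  option (set_type (~` Z)).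

HB.instance Definition _ (B : topologicalType) (Z : set B) :=
  Choice.copy (collapse Z) (option (set_type (~` Z))).

Definition collapse_map (B : topologicalType) (Z : set B) (b : B)
  : collapse Z :=
  match pselect (Z b) with
  | left _ => None
  | right h => Some (SigSub (@mem_set _ (~` Z) b h))
  end.

Definition collapse_open (B : topologicalType) (Z : set B)
  (V : set (collapse Z)) : Prop :=
  open (collapse_map Z @^-1` V).

Section collapse_topology.
Context (B : topologicalType) (Z : set B).

Let copT : collapse_open [set: collapse Z].
Proof. by rewrite /collapse_open preimage_setT; exact: openT. Qed.

Let copI : setI_closed (@collapse_open B Z).
Proof. by move=> ? ? ? ?; exact: openI. Qed.

Let cop_bigU (I : Type) (f : I -> set (collapse Z)) :
  (forall i, collapse_open (f i)) -> collapse_open (\bigcup_i f i).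
Proof.
by move=> ofi; rewrite /collapse_open preimage_bigcup;
  apply: bigcup_open => i _; exact: ofi.
Qed.

HB.instance Definition _ := isOpenTopological.Build (collapse Z) copT copI cop_bigU.

End collapse_topology.

Definition zeta_map (X B : topologicalType) (e : X -> B) (Z : set B)
  (o : option X) : collapse Z :=
  match o with
  | None => None
  | Some x => collapse_map Z (e x)
  end.

(* zeta_X(Z) : option X with the topology induced by zeta_map, i.e. the
   subspace X u {z} of the quotient (zeta_map is injective for Z in Zfamily). *)
Notation zeta e Z := (initial_topology (zeta_map e Z)).

(* Main.v *)
Require Import Defs.
From HB Require Import structures.
From mathcomp Require Import all_boot all_order all_algebra.
From mathcomp Require Import all_classical.
From mathcomp Require Import reals topology normedtype.
From mathcomp Require Import Rstruct Rstruct_topology.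
From Stdlib Require Import Rdefinitions Raxioms.
Import Order.TTheory GRing.Theory Num.Theory.

Set Implicit Arguments.
Unset Strict Implicit.
Unset Printing Implicit Defensive.

Local Open Scope classical_set_scope.
Local Notation RR := Rdefinitions.R.
Section Helpers.
Local Open Scope ring_scope.

Lemma hclosed1 (T : topologicalType) (h : hausdorff_space T) (x : T) : closed [set x].
Proof. by apply/accessible_closed_set1/hausdorff_accessible. Qed.

Lemma normal_sep (T : topologicalType) : normal_space T ->
 forall A C : set T, closed A -> closed C -> A `&` C = set0 ->
 exists U V, [/\ open U, open V, A `<=` U, C `<=` V & U `&` V = set0].
Proof. by move=> n; exact: ((@normal_openP RR T).1 n). Qed.

Lemma urysohn_fun (T : topologicalType) : normal_space T ->
  forall A C : set T, closed A -> closed C -> A `&` C = set0 ->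
  exists f : T -> RR, [/\ continuous f, (forall x, 0 <= f x <= 1),
     (forall x, A x -> f x = 0) & (forall x, C x -> f x = 1)].
Proof.
move=> nT A C cA cC AC.
have := (@normal_separatorP RR T).1 nT A C cA cC AC.
move/(@uniform_separatorP T RR) => [f [cf rf fA fC]]; exists f; split => //.
- by move=> x; have := rf (f x) (imageT _ _); rewrite /= in_itv.
- by move=> x Ax; apply: fA; exists x.
- by move=> x Cx; apply: fC; exists x.
Qed.

Definition I01set : set RR := `[0%R, 1%R]%classic.
Definition I01 := set_type I01set.

Lemma I01_val_cont : continuous (set_val : I01 -> RR).
Proof. exact: initial_continuous. Qed.

Lemma I01_hausdorff : hausdorff_space I01.
Proof.
rewrite open_hausdorff => x y xy.
have : set_val x != set_val y by apply: contra xy => /eqP/val_inj ->.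
have := @Rhausdorff RR; rewrite open_hausdorff => /[apply] -[[A C]] /= [xA yC] [oA oC AC].
exists (set_val @^-1` A, set_val @^-1` C) => /=.
  by rewrite !inE; split; apply/set_mem.
split.
- by exists A.
- by exists C.
- by rewrite -preimage_setI (eqP AC) preimage_set0.
Qed.

Lemma I01_compact : compact [set: I01].
Proof.
have h0 : I01set 0%R by rewrite /I01set /= in_itv /= lexx ler01.
pose r (t : RR) : I01 := match pselect (I01set t) with
  | left h => exist _ t (mem_set h) | right _ => exist _ 0%R (mem_set h0) end.
have rc : {within I01set, continuous r}.
  apply/subspace_sigL_continuousP.
  have -> : sigL I01set r = id.
    apply/funext => -[t ht]; rewrite /sigL /r /=.
    case: pselect => h; last by exfalso; apply: h; exact/set_mem.
    by congr exist; apply: Prop_irrelevance.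
  by apply/continuousP => A oA.
have := @continuous_compact _ _ r I01set rc (@segment_compact RR 0%R 1%R).
suff -> : r @` `[0%R, 1%R]%classic = [set: I01] by [].
apply/seteqP; split => // -[t ht] _; exists t; first exact/set_mem.
rewrite /r; case: pselect => h; last by exfalso; apply: h; exact/set_mem.
by congr exist; apply: Prop_irrelevance.
Qed.

Lemma stone_ext (X B : topologicalType) (e : X -> B) : stone_cech e ->
  forall g : X -> RR, continuous g -> (forall x, 0 <= g x <= 1) ->
  exists G : B -> RR, continuous G /\ (forall x, G (e x) = g x).
Proof.
case=> _ _ _ _ ext g cg g01.
have hg x : g x \in I01set by apply/mem_set; rewrite /I01set /= in_itv /=.
pose g' (x : X) : I01 := exist _ (g x) (hg x).
have cg' : continuous g'.
  apply/continuousP => U [A oA <-].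
  have -> : g' @^-1` (set_val @^-1` A) = g @^-1` A by [].
  by move/continuousP: cg; apply.
have [G0 [cG0 G0e]] := ext I01 g' I01_compact I01_hausdorff cg'.
exists (set_val \o G0); split.
  by move=> b; apply: continuous_comp; [exact: cG0 | exact: I01_val_cont].
by move=> x /=; have := congr1 (fun h => set_val (h x)) G0e.
Qed.

Lemma r01 (r : RR) : 0 <= r <= 1 ->
  Rle (IZR BinNums.Z0) r /\ Rle r (IZR (BinNums.Zpos BinNums.xH)).
Proof. by move=> /andP[h1 h2]; split; apply/RleP. Qed.

End Helpers.
Arguments hclosed1 {T} h x.

Definition zset (X B : Type) (e : X -> B) (W : set B) (n : Prop) : set (option X) :=
  fun o => match o with None => n | Some x => W (e x) end.

Lemma closed_preimage (S T : topologicalType) (f : S -> T) (C : set T) :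
  continuous f -> closed C -> closed (f @^-1` C).
Proof.
move=> cf cC; rewrite -openC preimage_setC.
by move/continuousP: cf; apply; rewrite openC.
Qed.

Lemma closure_min (T : topologicalType) (A C : set T) :
  closed C -> A `<=` C -> closure A `<=` C.
Proof. by move=> cC AC x /(closureS AC); rewrite -(closure_id C).1. Qed.

Lemma cont_closure (S T : topologicalType) (f : S -> T) (A : set S) x :
  continuous f -> closure A x -> closure (f @` A) (f x).
Proof.
move=> cf clA N /cf nN; have [s [As Ns]] := clA _ nN.
by exists (f s); split => //; exists s.
Qed.

Lemma open_nbhs_sub (T : topologicalType) (p : T) (N : set T) :
  nbhs p N -> exists2 O, open O /\ O p & O `<=` N.
Proof. by rewrite nbhsE => -[O [oO Op] ON]; exists O. Qed.

Lemma stone_sep (X B : topologicalType) (e : X -> B) : stone_cech e ->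
  normal_space X -> forall A C : set X, closed A -> closed C -> A `&` C = set0 ->
  closure (e @` A) `&` closure (e @` C) = set0.
Proof.
move=> sc nX A C cA cC AC.
have [g [cg g01 g0 g1]] := urysohn_fun nX cA cC AC.
have [G [cG Ge]] := stone_ext sc cg g01.
have h0 : closure (e @` A) `<=` G @^-1` [set 0%R].
  apply: closure_min; first exact: closed_preimage cG (hclosed1 (@Rhausdorff RR) _).
  by move=> _ [a Aa <-]; rewrite /preimage /= Ge g0.
have h1 : closure (e @` C) `<=` G @^-1` [set 1%R].
  apply: closure_min; first exact: closed_preimage cG (hclosed1 (@Rhausdorff RR) _).
  by move=> _ [a Aa <-]; rewrite /preimage /= Ge g1.
apply/seteqP; split => // b [/h0 /= hb0 /h1 /=]; rewrite hb0 => /eqP.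
by rewrite eq_sym oner_eq0.
Qed.

Definition compl_normal (T : topologicalType) :=
  forall S1 S2 : set T, closure S1 `&` S2 = set0 -> S1 `&` closure S2 = set0 ->
  exists U V, [/\ open U, open V, S1 `<=` U, S2 `<=` V & U `&` V = set0].

Lemma CN_HN (T : topologicalType) : compl_normal T -> hereditarily_normal T.
Proof.
move=> cn A; apply/(@normal_openP RR) => P1 P2 cP1 cP2 P12.
have [O1 oO1 hO1] : open (~` P1) by rewrite openC.
have [O2 oO2 hO2] : open (~` P2) by rewrite openC.
have sub1 : set_val @` P1 `<=` ~` O1.
  by move=> _ [p hp <-] hO; have : (~` P1) p by rewrite -hO1.
have sub2 : set_val @` P2 `<=` ~` O2.
  by move=> _ [p hp <-] hO; have : (~` P2) p by rewrite -hO2.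
have cO1 : closed (~` O1) by exact: open_closedC.
have cO2 : closed (~` O2) by exact: open_closedC.
have [] := cn (set_val @` P1) (set_val @` P2).
- apply/seteqP; split => // b [/(closure_min cO1 sub1) hc [p hp pb]].
  subst b; have : P1 p by apply: contrapT => np; apply: hc; have : (~` P1) p by []; rewrite -hO1.
  by move=> h; have : (P1 `&` P2) p by []; rewrite P12.
- apply/seteqP; split => // b [[p hp pb] /(closure_min cO2 sub2) hc].
  subst b; have : P2 p by apply: contrapT => np; apply: hc; have : (~` P2) p by []; rewrite -hO2.
  by move=> h; have : (P1 `&` P2) p by []; rewrite P12.
move=> U [V [oU oV S1U S2V UV]].
exists (set_val @^-1` U), (set_val @^-1` V); split.
- by exists U.
- by exists V.
- by move=> p hp; apply: S1U; exists p.
- by move=> p hp; apply: S2V; exists p.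
- by rewrite -preimage_setI UV preimage_set0.
Qed.

Lemma HN_CN (T : topologicalType) : hereditarily_normal T -> compl_normal T.
Proof.
move=> hn S1 S2 h1 h2.
pose A := ~` (closure S1 `&` closure S2).
have oA : open A by rewrite openC; apply: closedI; exact: closed_closure.
have nA := (@normal_openP RR _).1 (hn A).
have cv : continuous (set_val : A -> T) by exact: initial_continuous.
have [] := nA (set_val @^-1` closure S1) (set_val @^-1` closure S2).
- exact: closed_preimage cv (@closed_closure _ _).
- exact: closed_preimage cv (@closed_closure _ _).
- apply/seteqP; split => // p [c1 c2].
  by have := set_mem (valP p); apply.
move=> U' [V' [[U0 oU0 hU] [V0 oV0 hV] s1 s2 UV]].
have inA1 s : S1 s -> A s.
  by move=> hs [_ c2]; have : (S1 `&` closure S2) s by []; rewrite h2.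
have inA2 s : S2 s -> A s.
  by move=> hs [c1 _]; have : (closure S1 `&` S2) s by []; rewrite h1.
exists (U0 `&` A), (V0 `&` A); split.
- exact: openI.
- exact: openI.
- move=> s hs; split; last exact: inA1.
  have : U' (exist _ s (mem_set (inA1 s hs)) : A) by apply: s1; exact: subset_closure.
  by rewrite -hU.
- move=> s hs; split; last exact: inA2.
  have : V' (exist _ s (mem_set (inA2 s hs)) : A) by apply: s2; exact: subset_closure.
  by rewrite -hV.
- apply/seteqP; split => // y [[U0y Ay] [V0y _]].
  have : (U' `&` V') (exist _ y (mem_set Ay) : A) by rewrite -hU -hV.
  by rewrite UV.
Qed.

Lemma comp_in (X : topologicalType) (D : set X) x : open D -> closed D -> ~ D x ->
  connected_component setT x `<=` ~` D.
Proof.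
move=> oD cD nDx.
have cc := @component_connected X setT x.
have E : connected_component setT x `&` ~` D = connected_component setT x.
  apply: cc.
- by exists x; split => //; exact: connected_component_refl.
- by exists (~` D) => //; rewrite openC.
- by exists (~` D) => //; exact: open_closedC.
move=> y Cy; have : (connected_component setT x `&` ~` D) y by rewrite E.
by case.
Qed.

Section Zeta.
Context (X B : topologicalType) (e : X -> B) (Z : set B).
Hypothesis embe : embedding e.
Hypothesis cZ : closed Z.
Hypothesis ZX : Z `<=` ~` range e.

Lemma zset_open (W : set B) (n : Prop) : open W -> (forall b, Z b -> (n <-> W b)) ->
  open (zset e W n : set (zeta e Z)).
Proof.
move=> oW hZ.
pose V : set (collapse Z) := fun c => match c with None => n | Some b => W (set_val b) end.
have hV : collapse_map Z @^-1` V = W.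
  apply/seteqP; split => b; rewrite /collapse_map /preimage /=;
    case: pselect => [Zb|nZb] //=; by have := hZ b Zb => -[].
exists V.
  by rewrite /open /= /collapse_open hV.
have hx x : V (collapse_map Z (e x)) = W (e x).
  by have := congr1 (fun P => P (e x)) hV.
by apply/seteqP; split => -[x|] //=; rewrite /preimage /= hx.
Qed.

Lemma zeta_open_inv (U : set (zeta e Z)) : open U ->
  exists W, [/\ open W, U = zset e W (U None) & forall b, Z b -> (U None <-> W b)].
Proof.
case=> V oV <-; exists (collapse_map Z @^-1` V); split => //.
- by apply/seteqP; split => -[x|].
- move=> b Zb; rewrite /preimage /= /collapse_map; case: pselect => //.
Qed.

Hypothesis hsB : hausdorff_space B.

Lemma ZeN x : ~ Z (e x).
Proof. by move=> /ZX; apply; exists x. Qed.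

Lemma zX_open (N : set X) : open N -> open (Some @` N : set (zeta e Z)).
Proof.
move=> oN; case: embe => _ inje /(_ N oN) [M [oM hM]].
have -> : (Some @` N : set (zeta e Z)) = zset e (M `&` ~` Z) False.
  apply/seteqP; split => -[x|] //=.
  - case=> y Ny [<-]; split; last exact: ZeN.
    have : (e @` N) (e y) by exists y.
    by rewrite hM => -[].
  - by case.
  - move=> [Mx _]; have : (M `&` range e) (e x) by split => //; exists x.
    by rewrite -hM => -[y Ny eyx]; exists y => //; rewrite (inje _ _ eyx).
apply: zset_open.
  by apply: openI => //; rewrite openC.
by move=> b Zb; split => // -[].
Qed.

Lemma Some_cont : continuous (Some : X -> zeta e Z).
Proof.
apply/continuousP => U /zeta_open_inv [W [oW hU _]].
have -> : Some @^-1` U = e @^-1` W by rewrite hU.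
by case: embe => ce _ _; move/continuousP: ce; apply.
Qed.

Lemma zeta_fun_cont (T : topologicalType) (g : B -> T) (c : T) :
  continuous g -> (forall b, Z b -> g b = c) ->
  continuous (fun o : zeta e Z => match o with None => c | Some x => g (e x) end).
Proof.
move=> cg gZ; apply/continuousP => A oA.
have -> : (fun o : zeta e Z => match o with None => c | Some x => g (e x) end) @^-1` A
   = zset e (g @^-1` A) (A c).
  by apply/seteqP; split => -[x|].
apply: zset_open; first by move/continuousP: cg; apply.
by move=> b Zb; rewrite /preimage /= gZ.
Qed.

Lemma zeta_T1 : T1_space (zeta e Z).
Proof.
have c1 := hclosed1 hsB.
case: embe => _ inje _.
move=> [x|] [y|] // xy.
- exists (zset e (~` [set e y] `&` ~` Z) False); split.
  + apply: zset_open; first by apply: openI; rewrite openC //.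
    by move=> b Zb; split => // -[].
  + rewrite inE /=; split; last exact: ZeN.
    by move=> /inje exy; move: xy; rewrite exy eqxx.
  + by rewrite inE /= => -[].
- exists (zset e (~` Z) False); split.
  + by apply: zset_open; [rewrite openC | move=> b Zb; split].
  + by rewrite inE /=; apply: ZeN.
  + by rewrite inE.
- exists (zset e (~` [set e y]) True); split.
  + apply: zset_open; first by rewrite openC.
    by move=> b Zb; split => // _ eb; apply: (ZX Zb); exists y.
  + by rewrite inE.
  + by rewrite inE /= => /(_ erefl).
Qed.

Hypothesis nB : normal_space B.

Lemma zeta_CR : completely_regular (zeta e Z).
Proof.
move=> o F cF nFo.
have oU : open (~` F) by rewrite openC.
have [W [oW hU hZ]] := zeta_open_inv oU.
case: o nFo => [x0|] nFo.
- have Wx0 : W (e x0) by have : (~` F) (Some x0) := nFo; rewrite hU.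
  have dj : [set e x0] `&` (~` W `|` Z) = set0.
    apply/seteqP; split => // b [/= -> [//|]]; exact: ZeN.
  have [g [cg g01 g0 g1]] := urysohn_fun nB (hclosed1 hsB (e x0))
     (closedU (open_closedC oW) cZ) dj.
  exists (fun o : zeta e Z => match o with None => 1%R | Some x => g (e x) end); split.
  + by apply: zeta_fun_cont => // b Zb; apply: g1; right.
  + exact: g0.
  + move=> [y|] Fy //; apply: g1; left => Wy.
    by have : (~` F) (Some y) by rewrite hU.
  + by move=> [y|]; apply: r01; rewrite //= ler01 lexx.
- have ZW : Z `<=` W by move=> b Zb; apply/(hZ b Zb).
  have dj : Z `&` ~` W = set0 by apply/seteqP; split => // b [/ZW].
  have [g [cg g01 g0 g1]] := urysohn_fun nB cZ (open_closedC oW) dj.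
  exists (fun o : zeta e Z => match o with None => 0%R | Some x => g (e x) end); split.
  + by apply: zeta_fun_cont => // b Zb; apply: g0.
  + by [].
  + move=> [y|] Fy //; apply: g1 => Wy.
    by have : (~` F) (Some y) by rewrite hU.
  + by move=> [y|]; apply: r01; rewrite //= ler01 lexx.
Qed.

Section ZetaNormal.
Hypothesis sepX : forall A C : set X, closed A -> closed C -> A `&` C = set0 ->
  closure (e @` A) `&` closure (e @` C) = set0.

Lemma zeta_normal_aux (A C : set (zeta e Z)) : closed A -> closed C ->
  A `&` C = set0 -> ~ C None ->
  exists U V, [/\ open U, open V, A `<=` U, C `<=` V & U `&` V = set0].
Proof.
move=> cA cC AC nC.
have cA' : closed (Some @^-1` A : set X) by apply: closed_preimage cA; exact: Some_cont.
have cC' : closed (Some @^-1` C : set X) by apply: closed_preimage cC; exact: Some_cont.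
have dj' : (Some @^-1` A : set X) `&` Some @^-1` C = set0.
  by apply/seteqP; split => // x [hA hC]; have : (A `&` C) (Some x) by []; rewrite AC.
have hSC := sepX cA' cC' dj'.
have ZC : Z `&` closure (e @` (Some @^-1` C : set X)) = set0.
  have oCc : open (~` C) by rewrite openC.
  have [W [oW hU hZ]] := zeta_open_inv oCc.
  apply/seteqP; split => // b [Zb].
  have Wb : W b by apply/(hZ b Zb).
  move=> /(_ W (open_nbhs_nbhs (conj oW Wb))) [_ [[c Cc <-] Wc]].
  have : (~` C) (Some c) by rewrite hU.
  by [].
have djK : (closure (e @` (Some @^-1` A : set X)) `|` Z) `&`
    closure (e @` (Some @^-1` C : set X)) = set0.
  apply/seteqP; split => // b [[hA|hZ] hC].
  + by have : (closure (e @` (Some @^-1` A : set X)) `&` closure (e @` (Some @^-1` C : set X))) b by []; rewrite hSC.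
  + by have : (Z `&` closure (e @` (Some @^-1` C : set X))) b by []; rewrite ZC.
have [UA [UC [oUA oUC KA KC UAC]]] := normal_sep nB
  (closedU (@closed_closure _ (e @` (Some @^-1` A : set X))) cZ)
  (@closed_closure _ (e @` (Some @^-1` C : set X))) djK.
exists (zset e UA True), (zset e UC False); split.
+ by apply: zset_open => // b Zb; split => // _; apply: KA; right.
+ apply: zset_open => // b Zb; split => // UCb.
  have : (UA `&` UC) b by split => //; apply: KA; right.
  by rewrite UAC.
+ move=> [a|] Aa //=; apply: KA; left; apply: subset_closure; exists a => //.
+ move=> [c|] Cc //=; apply: KC; apply: subset_closure; exists c => //.
+ apply/seteqP; split => // -[x|] [] //= h1 h2.
  by have : (UA `&` UC) (e x) by []; rewrite UAC.
Qed.

Lemma zeta_normal : normal_space (zeta e Z).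
Proof.
apply/(@normal_openP RR) => A C cA cC AC.
case: (pselect (C None)) => hC.
- have hA : ~ A None by move=> hA; have : (A `&` C) None by []; rewrite AC.
  have CA : C `&` A = set0 by rewrite setIC.
  have [U [V [oU oV CU AV UV]]] := zeta_normal_aux cC cA CA hA.
  by exists V, U; split => //; rewrite setIC.
- exact: zeta_normal_aux.
Qed.

End ZetaNormal.

Lemma sep_pull (S1 S2 : set (zeta e Z)) : closure S1 `&` S2 = set0 ->
  closure (Some @^-1` S1 : set X) `&` (Some @^-1` S2) = set0.
Proof.
move=> h; apply/seteqP; split => // x [cx s2].
have := cont_closure Some_cont cx.
have sub : (Some @` (Some @^-1` S1 : set X) : set (zeta e Z)) `<=` S1.
  by move=> _ [y hy <-].
move/(closureS sub) => c1.
by have : (closure S1 `&` S2) (Some x) by []; rewrite h.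
Qed.

Section ZetaCN.
Hypothesis cnX : compl_normal X.

Lemma zeta_CN_aux (S1 S2 : set (zeta e Z)) : S1 None ->
  closure S1 `&` S2 = set0 -> S1 `&` closure S2 = set0 ->
  exists U V, [/\ open U, open V, S1 `<=` U, S2 `<=` V & U `&` V = set0].
Proof.
move=> S1N h1 h2.
have nS2 : ~ closure S2 None.
  by move=> c; have : (S1 `&` closure S2) None by []; rewrite h2.
case/existsNP: nS2 => N /not_implyP [nN hN].
have [N' [oN' N'N] N'sub] := open_nbhs_sub nN.
have [W [oW hN' hZ]] := zeta_open_inv oN'.
have ZW : Z `<=` W by move=> b Zb; apply/(hZ b Zb).
have djZW : Z `&` ~` W = set0 by apply/seteqP; split => // b [/ZW].
have [U0 [V0 [oU0 oV0 ZU0 WV0 UV0]]] := normal_sep nB cZ (open_closedC oW) djZW.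
have clU0 : closure U0 `<=` W.
  move=> b /(closure_min (open_closedC oV0) _) h.
  apply: contrapT => nWb; apply: (h _ (WV0 _ nWb)).
  by move=> c U0c V0c; have : (U0 `&` V0) c by []; rewrite UV0.
have h1' := sep_pull h1.
have h2' : (Some @^-1` S1 : set X) `&` closure (Some @^-1` S2) = set0.
  by rewrite setIC; apply: sep_pull; rewrite setIC.
have [U' [V' [oU' oV' S1U' S2V' UV']]] := cnX h1' h2'.
have ce : continuous e by case: embe.
exists ((Some @` U' : set (zeta e Z)) `|` zset e U0 True),
  (Some @` (V' `&` e @^-1` (~` closure U0)) : set (zeta e Z)); split.
- apply: openU; first exact: zX_open.
  by apply: zset_open => // b Zb; split => // _; apply: ZU0.
- apply: zX_open; apply: openI => //.
  by move/continuousP: ce; apply; apply: closed_openC; exact: closed_closure.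
- move=> [s|] hs; [left; exists s => //; exact: S1U' | by right].
- move=> [s|] hs.
  + exists s => //; split; first exact: S2V'.
    move=> /clU0 Wes.
    have : N' (Some s) by rewrite hN'.
    move=> /N'sub Ns; apply: hN; by exists (Some s : zeta e Z).
  + have : (S1 `&` closure S2) None by split => //; exact: subset_closure.
    by rewrite h2.
- apply/seteqP; split => // o [hu [x [V'x ncl] xo]]; subst o.
  case: hu => [[u U'u [ux]]|/= U0x].
  + by subst u; have : (U' `&` V') x by []; rewrite UV'.
  + by apply: ncl; exact: subset_closure.
Qed.

Lemma zeta_CN : compl_normal (zeta e Z).
Proof.
move=> S1 S2 h1 h2.
case: (pselect (S1 None)) => [S1N|nS1]; first exact: zeta_CN_aux.
case: (pselect (S2 None)) => [S2N|nS2].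
  have g1 : closure S2 `&` S1 = set0 by rewrite setIC.
  have g2 : S2 `&` closure S1 = set0 by rewrite setIC.
  have [U [V [oU oV S2U S1V UV]]] := zeta_CN_aux S2N g1 g2.
  by exists V, U; split => //; rewrite setIC.
have g2 : (Some @^-1` S1 : set X) `&` closure (Some @^-1` S2) = set0.
  by rewrite setIC; apply: sep_pull; rewrite setIC.
have [U' [V' [oU' oV' S1U' S2V' UV']]] := cnX (sep_pull h1) g2.
exists (Some @` U' : set (zeta e Z)), (Some @` V' : set (zeta e Z)); split.
- exact: zX_open.
- exact: zX_open.
- by move=> [s|] hs //; exists s => //; exact: S1U'.
- by move=> [s|] hs //; exists s => //; exact: S2V'.
- apply/seteqP; split => // o [[u U'u <-] [v V'v [vu]]]; subst v.
  by have : (U' `&` V') u by []; rewrite UV'.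
Qed.

End ZetaCN.

Section ZetaOPC.
Hypothesis dense : closure (range e) = setT.
Hypothesis Zne : Z !=set0.
Hypothesis Zcomp : forall x, Z `&` closure (e @` connected_component setT x) !=set0.

Lemma zeta_dense : closure (range (Some : X -> zeta e Z)) = setT.
Proof.
apply/seteqP; split => // -[x|] _; first by apply: subset_closure; exists x.
move=> N nN; have [N' [oN' N'N] N'sub] := open_nbhs_sub nN.
have [W [oW hN' hZ]] := zeta_open_inv oN'.
case: Zne => b Zb; have Wb : W b by apply/(hZ b Zb).
have : closure (range e) b by rewrite dense.
move/(_ W (open_nbhs_nbhs (conj oW Wb))) => [_ [[x _ <-] Wex]].
exists (Some x); split; first by exists x.
by apply: N'sub; rewrite hN'.
Qed.

Lemma zeta_clopen_all (S : set (zeta e Z)) : open S -> closed S -> S None ->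
  forall x, S (Some x).
Proof.
move=> oS cS SN x; apply: contrapT => nSx.
have oD : open (Some @^-1` S : set X) by move/continuousP: Some_cont; apply.
have cD : closed (Some @^-1` S : set X) by apply: closed_preimage cS; exact: Some_cont.
have sub := comp_in oD cD nSx.
case: (Zcomp x) => b [Zb cb].
have [W [oW hS hZ]] := zeta_open_inv oS.
have Wb : W b by apply/(hZ b Zb).
case: (cb W (open_nbhs_nbhs (conj oW Wb))) => _ [[c Cc <-] Wc].
have : S (Some c) by rewrite hS.
exact: (sub c Cc).
Qed.

Lemma zeta_connected : connected [set: zeta e Z].
Proof.
move=> S [o So] [C1 oC1 hS1] [C2 cC2 hS2].
rewrite setTI in hS1; rewrite setTI in hS2.
have oS : open S by rewrite hS1.
have cS : closed S by rewrite hS2.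
case: (pselect (S None)) => SN.
  by apply/seteqP; split => // -[x|] _ //; exact: zeta_clopen_all.
have oS' : open (~` S) by rewrite openC.
have cS' : closed (~` S) by exact: open_closedC.
have := zeta_clopen_all oS' cS' SN.
by case: o So => [x|] So // /(_ x).
Qed.

Lemma zeta_opc : one_point_connectification (Some : X -> zeta e Z).
Proof.
split.
- split; first exact: Some_cont.
  + by move=> x y [].
  + move=> U oU; exists (Some @` U); split; first exact: zX_open.
    apply/seteqP; split => o.
    * move=> [x Ux <-]; split; [by exists x | by exists x].
    * by case.
- exact: zeta_dense.
- exists None; split; first by case.
  by case=> [x nx|//]; exfalso; apply: nx; exists x.
- exact: zeta_connected.
Qed.

End ZetaOPC.

End Zeta.

Lemma zeta_le (X B : topologicalType) (e : X -> B) (Z1 Z2 : set B) :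
  hausdorff_space B -> normal_space B -> closure (range e) = setT ->
  closed Z1 -> closed Z2 -> Z1 `<=` ~` range e -> Z2 `<=` ~` range e -> Z1 !=set0 ->
  (Z1 `<=` Z2 <-> conn_le (Some : X -> zeta e Z2) (Some : X -> zeta e Z1)).
Proof.
move=> hsB nB dense cZ1 cZ2 ZX1 ZX2 [b0 Zb0].
have nZ1 x : ~ Z1 (e x) by move=> /ZX1; apply; exists x.
have nZ2 x : ~ Z2 (e x) by move=> /ZX2; apply; exists x.
split.
- move=> Z12; exists (fun o : zeta e Z1 => (o : zeta e Z2)); split => //.
  apply/continuousP => U oU.
  have [W [oW hU hZ]] := zeta_open_inv oU.
  have -> : (fun o : zeta e Z1 => (o : zeta e Z2)) @^-1` U = zset e W (U None) by [].
  by apply: zset_open => // b Zb; apply: hZ; exact: Z12.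
- move=> [f [cf fS]].
  have fSx x : f (Some x) = Some x by have := congr1 (fun g => g x) fS.
  have fN : f None = None.
    case E : (f None) => [y|] //; exfalso.
    have djy : [set e y] `&` (Z1 `|` Z2) = set0.
      by apply/seteqP; split => // b [/= -> [/nZ1|/nZ2]].
    have [U0 [V0 [oU0 oV0 yU0 ZV0 UV0]]] := normal_sep nB (hclosed1 hsB (e y))
       (closedU cZ1 cZ2) djy.
    have oU : open (zset e U0 False : set (zeta e Z2)).
      apply: zset_open => // b Zb; split => // U0b.
      have : (U0 `&` V0) b by split => //; apply: ZV0; right.
      by rewrite UV0.
    have oP : open (f @^-1` (zset e U0 False : set (zeta e Z2))).
      by move/continuousP: cf; apply.
    have [W1 [oW1 hP hZ1]] := zeta_open_inv oP.
    have PN : (f @^-1` (zset e U0 False : set (zeta e Z2))) None.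
      by rewrite /preimage /= E /=; apply: yU0.
    have W1b : W1 b0 by apply/(hZ1 b0 Zb0).
    have V0b : V0 b0 by apply: ZV0; left.
    have : closure (range e) b0 by rewrite dense.
    move/(_ (W1 `&` V0) (open_nbhs_nbhs (conj (openI oW1 oV0) (conj W1b V0b)))).
    move=> [_ [[x _ <-] [W1x V0x]]].
    have : (f @^-1` (zset e U0 False : set (zeta e Z2))) (Some x) by rewrite hP.
    rewrite /preimage /= fSx /= => U0x.
    by have : (U0 `&` V0) (e x) by []; rewrite UV0.
  move=> b Zb; apply: contrapT => nZ2b.
  have djb : [set b] `&` Z2 = set0 by apply/seteqP; split => // c [/= ->].
  have [U0 [V0 [oU0 oV0 bU0 ZV0 UV0]]] := normal_sep nB (hclosed1 hsB b) cZ2 djb.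
  have oU : open (zset e V0 True : set (zeta e Z2)).
    by apply: zset_open => // c Zc; split => // _; exact: ZV0.
  have oP : open (f @^-1` (zset e V0 True : set (zeta e Z2))).
    by move/continuousP: cf; apply.
  have [W1 [oW1 hP hZ1]] := zeta_open_inv oP.
  have PN : (f @^-1` (zset e V0 True : set (zeta e Z2))) None.
    by rewrite /preimage /= fN.
  have W1b : W1 b by apply/(hZ1 b Zb).
  have U0b : U0 b by apply: bU0.
  have : closure (range e) b by rewrite dense.
  move/(_ (W1 `&` U0) (open_nbhs_nbhs (conj (openI oW1 oU0) (conj W1b U0b)))).
  move=> [_ [[x _ <-] [W1x U0x]]].
  have : (f @^-1` (zset e V0 True : set (zeta e Z2))) (Some x) by rewrite hP.
  rewrite /preimage /= fSx /= => V0x.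
  by have : (U0 `&` V0) (e x) by []; rewrite UV0.
Qed.

Section Part4.
Local Open Scope ring_scope.
Context (X B Y : topologicalType) (e : X -> B) (eY : X -> Y) (p : Y).
Hypothesis sc : stone_cech e.
Hypothesis T1Y : accessible_space Y.
Hypothesis crY : completely_regular Y.
Hypothesis embY : embedding eY.
Hypothesis np : ~ range eY p.
Hypothesis pu : forall y, ~ range eY y -> y = p.
Hypothesis conY : connected [set: Y].
Hypothesis lcX : locally_connected X.

Let cB : compact [set: B]. Proof. by case: sc. Qed.
Let hsB : hausdorff_space B. Proof. by case: sc. Qed.
Let embe : embedding e. Proof. by case: sc. Qed.
Let ce : continuous e. Proof. by case: sc => _ _ []. Qed.
Let eY_cont : continuous eY. Proof. by case: embY. Qed.
Let eY_inj : injective eY. Proof. by case: embY. Qed.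

Definition Zp : set B := fun b =>
  forall V : set Y, open V -> V p -> closure (e @` (eY @^-1` V)) b.

Lemma ycase y : y = p \/ exists x, y = eY x.
Proof.
case: (pselect (range eY y)) => [[x _ <-]|n]; first by right; exists x.
by left; exact: pu.
Qed.

Lemma rangeY_open : open (range eY).
Proof.
have -> : range eY = ~` [set p].
  apply/seteqP; split => y.
  - by move=> ry yp; apply: np; rewrite -yp.
  - by case: (ycase y) => [->|[x ->]] // /(_ erefl).
by rewrite openC; exact: accessible_closed_set1.
Qed.

Lemma eY_open_img (N : set X) : open N -> open (eY @` N).
Proof.
by move=> oN; case: embY => _ _ /(_ N oN) [M [oM ->]]; apply: openI oM rangeY_open.
Qed.

Lemma crY_fun (y : Y) (F : set Y) : closed F -> ~ F y ->
  exists g : Y -> RR, [/\ continuous g, g y = 0,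
     (forall z, F z -> g z = 1) & (forall z, 0 <= g z <= 1)].
Proof.
move=> cF nFy; have [g [cg gy gF g01]] := crY cF nFy.
exists g; split => // z; have [h1 h2] := g01 z.
by apply/andP; split; apply/RleP.
Qed.

Lemma extY (g : Y -> RR) : continuous g -> (forall z, 0 <= g z <= 1) ->
  exists G : B -> RR, continuous G /\ forall x, G (e x) = g (eY x).
Proof.
move=> cg g01.
have cge : continuous (g \o eY).
  by move=> x; apply: continuous_comp; [exact: eY_cont | exact: cg].
have g01' : forall x, 0 <= (g \o eY) x <= 1 by move=> x; exact: g01.
have [G [cG GE]] := stone_ext sc cge g01'.
by exists G.
Qed.

Lemma closure_K (G : B -> RR) (g : Y -> RR) (K : set RR) (V : set Y) :
  continuous G -> (forall x, G (e x) = g (eY x)) -> closed K ->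
  (forall y, V y -> K (g y)) -> forall b, closure (e @` (eY @^-1` V)) b -> K (G b).
Proof.
move=> cG Ge cK VK b; apply: (@closure_min _ _ (G @^-1` K)); first exact: closed_preimage cG cK.
by move=> _ [x Vx <-]; rewrite /preimage /= Ge; exact: VK.
Qed.

Lemma Zp_nrange : Zp `<=` ~` range e.
Proof.
move=> b Zb [x _ exb]; subst b.
have nF : ~ [set p] (eY x) by move=> /= h; apply: np; exists x.
have [g [cg g0 g1 g01]] := crY_fun (@accessible_closed_set1 Y T1Y p) nF.
have [G [cG Ge]] := extY cg g01.
pose V := g @^-1` [set r : RR | 2^-1 < r].
have oV : open V by move/continuousP: cg; apply; exact: open_gt.
have Vp : V p by rewrite /V /preimage /= g1 // invf_lt1 // ltr1n.
have := closure_K cG Ge (@closed_ge _ (2^-1 : RR)) (fun y (h : V y) => ltW h) (Zb V oV Vp).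
rewrite /= Ge g0 => h.
have : (0:RR) < 2^-1 by rewrite invr_gt0 ltr0n.
by rewrite ltNge h.
Qed.

Lemma Zp_closed : closed Zp.
Proof.
have -> : Zp = \bigcap_(V in [set V : set Y | open V /\ V p]) closure (e @` (eY @^-1` V)).
  apply/seteqP; split => b hb.
  - by move=> V [oV Vp]; exact: hb.
  - by move=> V oV Vp; exact: (hb V (conj oV Vp)).
by apply: closed_bigI => V _; exact: closed_closure.
Qed.

Lemma Zp_compact : compact Zp.
Proof. exact: subclosed_compact Zp_closed cB (@subsetT _ _). Qed.

Lemma cpt_cluster (S : set X) :
  (forall V, open V -> V p -> exists x, V (eY x) /\ S x) ->
  exists b, Zp b /\ closure (e @` S) b.
Proof.
move=> hS.
pose D := [set V : set Y | open V /\ V p].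
pose F := filter_from D (fun V => e @` (eY @^-1` V `&` S)).
have FF : Filter F.
  apply: filter_from_filter; first by exists setT; split => //; exact: openT.
  move=> V1 V2 [o1 p1] [o2 p2]; exists (V1 `&` V2); first by split => //; exact: openI.
  by move=> _ [x [[h1 h2] hs] <-]; split; exists x.
have PF : ProperFilter F.
  apply: filter_from_proper => V [oV Vp]; have [x [Vx Sx]] := hS V oV Vp.
  by exists (e x); exists x.
have FT : F setT by exact: filterT.
have [b [_ clb]] := cB PF FT.
exists b; split.
- move=> V oV Vp N nN.
  have FV : F (e @` (eY @^-1` V `&` S)) by exists V.
  have [_ [[x [Vx _] <-] Nx]] := clb _ _ FV nN.
  by exists (e x); split => //; exists x.
- move=> N nN.
  have FV : F (e @` (eY @^-1` setT `&` S)) by exists setT => //; split => //; exact: openT.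
  have [_ [[x [_ Sx] <-] Nx]] := clb _ _ FV nN.
  by exists (e x); split => //; exists x.
Qed.

Lemma comp_open x : open (connected_component [set: X] x).
Proof.
rewrite openE => y Cy.
have [V [oV Vy _ cV]] := lcX (@filterT _ (nbhs y) _).
have VC : V `<=` connected_component setT x.
  rewrite (same_connected_component Cy).
  exact: connected_component_max.
exact: filterS VC (open_nbhs_nbhs (conj oV Vy)).
Qed.

Lemma Zp_comp x : Zp `&` closure (e @` connected_component setT x) !=set0.
Proof.
set C := connected_component setT x.
suff : forall V, open V -> V p -> exists x', V (eY x') /\ C x'.
  by move/cpt_cluster => [b [Zb cb]]; exists b.
move=> V oV Vp; apply: contrapT => hV.
have hV' x' : V (eY x') -> ~ C x' by move=> Vx Cx; apply: hV; exists x'.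
have oC : open C := comp_open x.
have cC : closed C := @component_closed X setT x closedT.
have oS : open (eY @` C) := eY_open_img oC.
have cS : closed (eY @` C).
  move=> y cy; case: (ycase y) => [yp|[x' yx]]; subst y.
  - exfalso; have [_ [[c Cc <-] Vc]] := cy V (open_nbhs_nbhs (conj oV Vp)).
    exact: hV' c Vc Cc.
  - exists x' => //; apply: contrapT => nC.
    have oNC : open (~` C) by rewrite openC.
    have oM := eY_open_img oNC.
    have Mx : (eY @` (~` C)) (eY x') by exists x'.
    have [_ [[c Cc <-] [c' nc' e']]] := cy _ (open_nbhs_nbhs (conj oM Mx)).
    by rewrite (eY_inj e') in nc'.
have Cx : C x by exact: connected_component_refl.
have E : eY @` C = setT.
  apply: conY.
  - by exists (eY x); exists x.
  - by exists (eY @` C) => //; rewrite setTI.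
  - by exists (eY @` C) => //; rewrite setTI.
have : (eY @` C) p by rewrite E.
by case=> c _ h; apply: np; exists c.
Qed.

Definition hY (o : zeta e Zp) : Y := match o with None => p | Some x => eY x end.

Definition invY (y : Y) : zeta e Zp :=
  match pselect (range eY y) with
  | left H => Some (s2val (cid2 H))
  | right _ => None
  end.

Lemma invY_e x : invY (eY x) = Some x.
Proof.
rewrite /invY; case: pselect => [H|n]; last by exfalso; apply: n; exists x.
by case: cid2 => x0 _ /= /eY_inj ->.
Qed.

Lemma invY_p : invY p = None.
Proof. by rewrite /invY; case: pselect. Qed.

Let ZpX : Zp `<=` ~` range e := Zp_nrange.
Let cZp : closed Zp := Zp_closed.

Lemma hY_cont : continuous hY.
Proof.
apply/continuousP => U oU.
have oUe : open (eY @^-1` U) by move/continuousP: eY_cont; apply.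
case: (pselect (U p)) => Up; last first.
  have -> : hY @^-1` U = Some @` (eY @^-1` U).
    apply/seteqP; split => -[x|] //=.
    - by move=> h; exists x.
    - by case=> x' h [<-].
    - by case.
  exact: zX_open.
have nF : ~ (~` U) p by [].
have [g [cg gp g1 g01]] := crY_fun (open_closedC oU) nF.
have [G [cG Ge]] := extY cg g01.
pose W := G @^-1` [set r : RR | r < 1].
have oW : open W by move/continuousP: cG; apply; exact: open_lt.
have ZW : Zp `<=` W.
  move=> b Zb.
  pose V := g @^-1` [set r : RR | r < 2^-1].
  have oV : open V by move/continuousP: cg; apply; exact: open_lt.
  have Vp : V p by rewrite /V /preimage /= gp invr_gt0 ltr0n.
  have := closure_K cG Ge (@closed_le _ (2^-1 : RR)) (fun y (h : V y) => ltW h) (Zb V oV Vp).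
  by rewrite /W /preimage /= => h; apply: le_lt_trans h _; rewrite invf_lt1 // ltr1n.
have -> : hY @^-1` U = zset e W True `|` Some @` (eY @^-1` U).
  apply/seteqP; split => -[x|] //=.
  - by move=> h; right; exists x.
  - by move=> _; left.
  - case => [Wx|[x' h [<-]] //].
    apply: contrapT => nU; move: Wx; rewrite /W /preimage /= Ge g1 //.
    by rewrite ltxx.
apply: openU; last exact: zX_open.
by apply: zset_open => // b Zb; split => // _; exact: ZW.
Qed.

Lemma invY_cont : continuous invY.
Proof.
apply/continuousP => U oU.
have [W [oW hU hZ]] := zeta_open_inv oU.
have oI : open (eY @` (e @^-1` W)).
  by apply: eY_open_img; move/continuousP: ce; apply.
case: (pselect (U None)) => UN; last first.
  have -> : invY @^-1` U = eY @` (e @^-1` W) => //.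
  apply/seteqP; split => y; case: (ycase y) => [yp|[x yx]]; subst y.
  - by rewrite /preimage /= invY_p.
  - by rewrite /preimage /= invY_e hU => h; exists x.
  - by case=> x _ h; exfalso; apply: np; exists x.
  - by case=> x' h /eY_inj <-; rewrite /preimage /= invY_e hU.
have ZW : Zp `<=` W by move=> b Zb; apply/(hZ b Zb).
have [V0 [oV0 V0p hV0]] : exists V0, [/\ open V0, V0 p & forall x, V0 (eY x) -> W (e x)].
  apply: contrapT => hn.
  have [|b [Zb cb]] := @cpt_cluster (~` (e @^-1` W)).
    move=> V oV Vp; apply: contrapT => hn2; apply: hn; exists V; split => // x Vx.
    by apply: contrapT => nW; apply: hn2; exists x.
  have sub : e @` (~` (e @^-1` W)) `<=` ~` W by move=> _ [x hx <-].
  have := closure_min (open_closedC oW) sub cb.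
  by apply; exact: ZW.
have -> : invY @^-1` U = V0 `|` eY @` (e @^-1` W).
  apply/seteqP; split => y; case: (ycase y) => [yp|[x yx]]; subst y.
  - by move=> _; left.
  - by rewrite /preimage /= invY_e hU => h; right; exists x.
  - by rewrite /preimage /= invY_p.
  - case => [V0x|[x' h /eY_inj <-]]; rewrite /preimage /= invY_e hU //.
    exact: hV0.
exact: openU.
Qed.

Lemma part4 : Zfamily e Zp /\ conn_equiv (Some : X -> zeta e Zp) eY.
Proof.
split; first by split; [exact: Zp_nrange | exact: Zp_compact | exact: Zp_comp].
exists hY; split; first exact: hY_cont.
- exists invY; split; first exact: invY_cont.
  + by case=> [x|] /=; [exact: invY_e | exact: invY_p].
  + by move=> y; case: (ycase y) => [->|[x ->]]; rewrite ?invY_p ?invY_e.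
- by [].
Qed.

End Part4.

Lemma normal_cr (T : topologicalType) : accessible_space T -> normal_space T ->
  completely_regular T.
Proof.
move=> a n x F cF nFx.
have dj : [set x] `&` F = set0 by apply/seteqP; split => // y [/= ->].
have [g [cg g01 g0 g1]] := urysohn_fun n (@accessible_closed_set1 T a x) cF dj.
exists g; split => //; first exact: g0.
by move=> y; apply: r01.
Qed.

Lemma CN_normal (T : topologicalType) : compl_normal T -> normal_space T.
Proof.
move=> cn; apply/(@normal_openP RR) => A C cA cC AC; apply: cn.
- by rewrite -((closure_id A).1 cA).
- by rewrite -((closure_id C).1 cC).
Qed.

Lemma Ti_cr (i : sep_index) (T : topologicalType) : Ti i T ->
  accessible_space T /\ completely_regular T.
Proof.
case: i => /= -[a h]; split => //.
- exact: normal_cr.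
- by apply: normal_cr => //; apply: CN_normal; exact: HN_CN.
Qed.

Theorem lemma3p1 (i : sep_index) (X B : topologicalType) (e : X -> B) :
  Ti i X -> locally_connected X -> [set: X] !=set0 -> stone_cech e ->
  [/\ (forall Z : set B, Zfamily e Z ->
         Ti i (zeta e Z) /\
         one_point_connectification (Some : X -> zeta e Z)),
      (forall Z1 Z2 : set B, Zfamily e Z1 -> Zfamily e Z2 ->
         (Z1 `<=` Z2 <->
          conn_le (Some : X -> zeta e Z2) (Some : X -> zeta e Z1))),
      (forall Z1 Z2 : set B, Zfamily e Z1 -> Zfamily e Z2 ->
         conn_equiv (Some : X -> zeta e Z1) (Some : X -> zeta e Z2) ->
         Z1 = Z2) &
      (forall (Y : topologicalType) (eY : X -> Y),
         Ti i Y -> one_point_connectification eY ->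
         exists Z : set B, Zfamily e Z /\
           conn_equiv (Some : X -> zeta e Z) eY)].
Proof.
move=> TiX lcX [x0 _] sc.
have [cB hsB embe dense _] := sc.
have nB : normal_space B := compact_normal hsB cB.
have Zne (Z : set B) : Zfamily e Z -> Z !=set0.
  by case=> _ _ /(_ x0) [b [Zb _]]; exists b.
have part2 : forall Z1 Z2 : set B, Zfamily e Z1 -> Zfamily e Z2 ->
    (Z1 `<=` Z2 <-> conn_le (Some : X -> zeta e Z2) (Some : X -> zeta e Z1)).
  move=> Z1 Z2 hZ1 hZ2.
  have ne1 := Zne _ hZ1.
  case: hZ1 => ZX1 cpt1 _; case: hZ2 => ZX2 cpt2 _.
  apply: zeta_le => //; exact: compact_closed.
split.
- move=> Z hZ; have ne := Zne _ hZ; case: hZ => ZX cptZ Zcomp.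
  have cZ : closed Z := compact_closed hsB cptZ.
  split; last exact: zeta_opc.
  case: i TiX => /= -[T1X hX]; split; try exact: zeta_T1.
  + exact: zeta_CR.
  + by apply: zeta_normal => //; exact: stone_sep.
  + by apply: CN_HN; apply: zeta_CN => //; exact: HN_CN.
- exact: part2.
- move=> Z1 Z2 hZ1 hZ2 [h [ch [g [cg hg gh]] hS]].
  apply/seteqP; split.
  + by apply/(part2 _ _ hZ1 hZ2); exists h.
  + apply/(part2 _ _ hZ2 hZ1); exists g; split => //.
    apply/funext => x /=.
    have hx : h (Some x) = Some x := congr1 (fun f => f x) hS.
    by rewrite -{1}hx hg.
- move=> Y eY TiY [embY _ [p [np pu]] conY].
  have [T1Y crY] := Ti_cr TiY.
  have [Zf eqv] := part4 sc T1Y crY embY np pu conY lcX.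
  by exists (Zp e eY p).
Qed.
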